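(* Let $(X,d,\kappa)$ be a digital metric space, where either $X$ is finite or $d$ is an $\ell_p$ metric for some $1\le p\le\infty$. Let $S,T:X\to X$. Then the following are equivalent: (i) $S$ and $T$ are compatible; (ii) $S$ and $T$ are compatible of type (A); (iii) $S$ and $T$ are compatible of type (P).
   Context: A digital metric space is a triple $(X,d,\kappa)$ where $X\subset\mathbb{Z}^n$ for some positive integer $n$, $\kappa$ is an adjacency relation on $X$ (so $(X,\kappa)$ is a graph), and $d$ is a metric on $X$. For $x,y\in\mathbb{Z}^n$, the $\ell_p$ metric is $d(x,y)=(\sum_{i=1}^n|x_i-y_i|^p)^{1/p}$ for $1\le p<\infty$ and $d(x,y)=\max_i|x_i-y_i|$ for $p=\infty$. Limits are taken with respect to the metric $d$. Call a sequence $\{x_n\}\subset X$ admissible if $\lim_{n\to\infty}S(x_n)=\lim_{n\to\infty}T(x_n)=t$ for some $t\in X$. $S$ and $T$ are compatible if $\lim_{n\to\infty}d(S(T(x_n)),T(S(x_n)))=0$ for every admissible sequence; compatible of type (A) if $\lim_{n\to\infty}d(S(T(x_n)),T(T(x_n)))=0=\lim_{n\to\infty}d(T(S(x_n)),S(S(x_n)))$ for every admissible sequence; compatible of type (P) if $\lim_{n\to\infty}d(S(S(x_n)),T(T(x_n)))=0$ for every admissible sequence. *)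

(* Defs.v *)
From Stdlib Require Import Reals Lra ZArith List.
Import ListNotations.
Open Scope R_scope.

(* A point of Z^n is a list of integers of length n. *)
Definition point := list Z.

(* a^p for a >= 0, p > 0, with the convention 0^p = 0
   (Stdlib's Rpower 0 p is 1, so we guard the zero case). *)
Definition rpow (a p : R) : R :=
  if Req_EM_T a 0 then 0 else Rpower a p.

Inductive lp_exp := Lp (p : R) | Linf.

Definition lp_exp_valid (e : lp_exp) : Prop :=
  match e with Lp p => 1 <= p | Linf => True end.

Definition coord_diffs (x y : point) : list R :=
  map (fun ab => IZR (Z.abs (fst ab - snd ab))) (combine x y).

Definition lp_dist (e : lp_exp) (x y : point) : R :=
  match e with
  | Lp p => rpow (fold_right Rplus 0 (map (fun a => rpow a p) (coord_diffs x y))) (1 / p)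
  | Linf => fold_right Rmax 0 (coord_diffs x y)
  end.

Definition is_metric_on (X : point -> Prop) (d : point -> point -> R) : Prop :=
  (forall x y, X x -> X y -> 0 <= d x y) /\
  (forall x y, X x -> X y -> (d x y = 0 <-> x = y)) /\
  (forall x y, X x -> X y -> d x y = d y x) /\
  (forall x y z, X x -> X y -> X z -> d x z <= d x y + d y z).

Definition is_adjacency_on (X : point -> Prop) (kappa : point -> point -> Prop) : Prop :=
  (forall x y, kappa x y -> X x /\ X y) /\
  (forall x y, kappa x y -> kappa y x) /\
  (forall x, ~ kappa x x).

Definition digital_metric_space (n : nat) (X : point -> Prop)
  (d : point -> point -> R) (kappa : point -> point -> Prop) : Prop :=
  (forall x, X x -> length x = n) /\ is_adjacency_on X kappa /\ is_metric_on X d.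

Definition finite_set (X : point -> Prop) : Prop :=
  exists l : list point, forall x, X x -> In x l.

Definition d_lim (d : point -> point -> R) (u : nat -> point) (t : point) : Prop :=
  Un_cv (fun k => d (u k) t) 0.

Definition admissible (X : point -> Prop) (d : point -> point -> R)
  (S T : point -> point) (x : nat -> point) : Prop :=
  (forall k, X (x k)) /\
  exists t, X t /\ d_lim d (fun k => S (x k)) t /\ d_lim d (fun k => T (x k)) t.

Definition compatible X d (S T : point -> point) : Prop :=
  forall x, admissible X d S T x ->
    Un_cv (fun k => d (S (T (x k))) (T (S (x k)))) 0.

Definition compatible_A X d (S T : point -> point) : Prop :=
  forall x, admissible X d S T x ->
    Un_cv (fun k => d (S (T (x k))) (T (T (x k)))) 0 /\
    Un_cv (fun k => d (T (S (x k))) (S (S (x k)))) 0.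

Definition compatible_P X d (S T : point -> point) : Prop :=
  forall x, admissible X d S T x ->
    Un_cv (fun k => d (S (S (x k))) (T (T (x k)))) 0.

(* Main.v *)
Require Import Defs.
From Stdlib Require Import Reals ZArith List.
From Stdlib Require Import Lra Lia Classical.
Open Scope R_scope.

Lemma ln_nonneg (a : R) : 1 <= a -> 0 <= ln a.
Proof.
  intros H. destruct (Req_dec a 1) as [->|Hn]. rewrite ln_1; lra.
  left. rewrite <- ln_1. apply ln_increasing; lra.
Qed.

Lemma rpow_ge1 (a p : R) : 1 <= a -> 0 < p -> 1 <= rpow a p.
Proof.
  intros Ha Hp. unfold rpow. destruct (Req_EM_T a 0); [lra|].
  unfold Rpower. pose proof (exp_ineq1_le (p * ln a)).
  pose proof (ln_nonneg a Ha). pose proof (Rmult_le_pos p (ln a) ltac:(lra) H0). lra.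
Qed.

Lemma rpow_ge0 (a p : R) : 0 <= rpow a p.
Proof.
  unfold rpow. destruct (Req_EM_T a 0); [lra|]. unfold Rpower. left; apply exp_pos.
Qed.

Lemma coord_diffs_props (x y : point) : length x = length y -> x <> y ->
  (exists a, In a (coord_diffs x y) /\ 1 <= a) /\ (forall a, In a (coord_diffs x y) -> 0 <= a).
Proof.
  revert y. induction x as [|u x IH]; intros [|v y] Hl Hne; simpl in *; try discriminate.
  - congruence.
  - injection Hl as Hl. unfold coord_diffs in *. simpl.
    assert (H0 : 0 <= IZR (Z.abs (u - v))) by (apply IZR_le; lia).
    destruct (Z.eq_dec u v) as [->|Huv].
    + assert (x <> y) by congruence. destruct (IH y Hl H) as [[a [Ha1 Ha2]] Hp].
      split. exists a; auto. intros a0 [<-|Ha0]; auto.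
    + split.
      * exists (IZR (Z.abs (u - v))). split; auto. apply IZR_le; lia.
      * assert (forall a, In a (map (fun ab : Z * Z => IZR (Z.abs (fst ab - snd ab))) (combine x y)) -> 0 <= a).
        { intros a Ha. apply in_map_iff in Ha. destruct Ha as [[p q] [<- _]]. apply IZR_le; lia. }
        intros a0 [<-|Ha0]; auto.
Qed.

Lemma fold_max_ge (l : list R) a : In a l -> a <= fold_right Rmax 0 l.
Proof.
  induction l as [|b l IH]; simpl; [tauto|]. intros [<-|H].
  apply Rmax_l. eapply Rle_trans; [apply IH; auto| apply Rmax_r].
Qed.

Lemma fold_sum_ge (l : list R) a : (forall b, In b l -> 0 <= b) -> In a l -> a <= fold_right Rplus 0 l.
Proof.
  induction l as [|b l IH]; simpl; [tauto|]. intros Hp [<-|H].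
  - assert (0 <= fold_right Rplus 0 l).
    { clear IH. induction l as [|a0 l IHl]; simpl; [lra|]. assert (0 <= a0) by (apply Hp; simpl; auto).
      assert (0 <= fold_right Rplus 0 l) by (apply IHl; intros; apply Hp; simpl in *; tauto). lra. }
    lra.
  - assert (0 <= b) by auto. assert (a <= fold_right Rplus 0 l) by (apply IH; auto). lra.
Qed.

Lemma lp_dist_ge1 e x y : lp_exp_valid e -> length x = length y -> x <> y -> 1 <= lp_dist e x y.
Proof.
  intros He Hl Hne. destruct (coord_diffs_props x y Hl Hne) as [[a [Ha1 Ha2]] Hp].
  destruct e as [p|]; simpl in *.
  - apply rpow_ge1; [|apply Rdiv_lt_0_compat; lra].
    eapply Rle_trans; [apply (rpow_ge1 a p); lra|].
    apply fold_sum_ge.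
    + intros b Hb. apply in_map_iff in Hb. destruct Hb as [c [<- _]]. apply rpow_ge0.
    + apply in_map_iff. eauto.
  - eapply Rle_trans; [exact Ha2|]. apply fold_max_ge; auto.
Qed.

Lemma finite_sep (X : point -> Prop) (d : point -> point -> R) :
  is_metric_on X d -> forall l : list point,
  exists delta, 0 < delta /\ forall x y, In x l -> In y l -> X x -> X y -> x <> y -> delta <= d x y.
Proof.
  intros [Hpos [Hz [Hsym _]]]. induction l as [|a l IH].
  - exists 1. split; [lra|]. simpl; tauto.
  - destruct IH as [de [Hde H]].
    assert (exists de', 0 < de' /\ forall y, In y l -> X a -> X y -> a <> y -> de' <= d a y) as [de' [Hde' H']].
    { clear H. induction l as [|b l IHl].
      - exists 1. split; [lra|]. simpl; tauto.
      - destruct IHl as [e1 [He1 H1]].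
        destruct (classic (X a /\ X b /\ a <> b)) as [[Xa [Xb Hab]]|Hn].
        + assert (0 < d a b).
          { destruct (Hpos a b Xa Xb); auto. exfalso. apply Hab. apply Hz; auto. }
          exists (Rmin e1 (d a b)). split. apply Rmin_pos; auto.
          intros y [<-|Hy] Xa' Xy Hay. apply Rmin_r. eapply Rle_trans; [apply Rmin_l| apply H1; auto].
        + exists e1. split; auto. intros y [<-|Hy] Xa Xy Hay. exfalso; tauto. auto. }
    exists (Rmin de de'). split. apply Rmin_pos; auto.
    intros x y [<-|Hx] [<-|Hy] Xx Xy Hxy.
    + congruence.
    + eapply Rle_trans; [apply Rmin_r| apply H'; auto].
    + rewrite Hsym by auto. eapply Rle_trans; [apply Rmin_r| apply H'; auto].
    + eapply Rle_trans; [apply Rmin_l| apply H; auto].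
Qed.

Lemma sep (n : nat) (X : point -> Prop) (d : point -> point -> R) (kappa : point -> point -> Prop) :
  digital_metric_space n X d kappa ->
  (finite_set X \/
   exists e : lp_exp, lp_exp_valid e /\
     forall x y, X x -> X y -> d x y = lp_dist e x y) ->
  exists delta, 0 < delta /\ forall x y, X x -> X y -> d x y < delta -> x = y.
Proof.
  intros [Hlen [_ Hm]] [[l Hl]|[e [He Hd]]].
  - destruct (finite_sep X d Hm l) as [de [Hde H]]. exists de. split; auto.
    intros x y Xx Xy Hxy. apply NNPP. intro Hne.
    pose proof (H x y (Hl x Xx) (Hl y Xy) Xx Xy Hne). lra.
  - exists 1. split; [lra|]. intros x y Xx Xy Hxy. apply NNPP. intro Hne.
    rewrite Hd in Hxy by auto.
    pose proof (lp_dist_ge1 e x y He (eq_trans (Hlen x Xx) (eq_sym (Hlen y Xy))) Hne). lra.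
Qed.

Lemma lim_ev (X : point -> Prop) d delta u t :
  0 < delta -> (forall x y, X x -> X y -> d x y < delta -> x = y) ->
  (forall k, X (u k)) -> X t -> d_lim d u t -> exists N, forall k, (k >= N)%nat -> u k = t.
Proof.
  intros Hd Hsep Hu Ht Hl. destruct (Hl delta Hd) as [N HN]. exists N. intros k Hk.
  specialize (HN k Hk). unfold R_dist in HN. rewrite Rminus_0_r in HN.
  apply Hsep; auto. pose proof (Rle_abs (d (u k) t)). lra.
Qed.

Lemma ev_const (f : nat -> R) c : (exists N, forall k, (k >= N)%nat -> f k = c) ->
  (Un_cv f 0 <-> c = 0).
Proof.
  intros [N HN]. split.
  - intros H. apply NNPP. intro Hc. assert (0 < Rabs c) by (apply Rabs_pos_lt; auto).
    destruct (H (Rabs c) H0) as [M HM]. specialize (HM (max N M) ltac:(lia)).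
    rewrite HN in HM by lia. unfold R_dist in HM. rewrite Rminus_0_r in HM. lra.
  - intros -> eps Heps. exists N. intros k Hk. rewrite HN by auto. unfold R_dist.
    rewrite Rminus_0_r, Rabs_R0. auto.
Qed.

Theorem theorem3p3 (n : nat) (X : point -> Prop) (d : point -> point -> R)
  (kappa : point -> point -> Prop) (S T : point -> point) :
  digital_metric_space n X d kappa ->
  (finite_set X \/
   exists e : lp_exp, lp_exp_valid e /\
     forall x y, X x -> X y -> d x y = lp_dist e x y) ->
  (forall x, X x -> X (S x)) ->
  (forall x, X x -> X (T x)) ->
  (compatible X d S T <-> compatible_A X d S T) /\
  (compatible_A X d S T <-> compatible_P X d S T).
Proof.
  intros Hdm Hcase HS HT.
  destruct (sep n X d kappa Hdm Hcase) as [de [Hde Hsep]].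
  destruct Hdm as [_ [_ [Hpos [Hz [Hsym _]]]]].
  assert (Key : forall x, admissible X d S T x -> exists t, X t /\
     (Un_cv (fun k => d (S (T (x k))) (T (S (x k)))) 0 <-> S t = T t) /\
     (Un_cv (fun k => d (S (T (x k))) (T (T (x k)))) 0 <-> S t = T t) /\
     (Un_cv (fun k => d (T (S (x k))) (S (S (x k)))) 0 <-> S t = T t) /\
     (Un_cv (fun k => d (S (S (x k))) (T (T (x k)))) 0 <-> S t = T t)).
  { intros x [Hx [t [Xt [H1 H2]]]]. exists t. split; auto.
    destruct (lim_ev X d de _ t Hde Hsep (fun k => HS _ (Hx k)) Xt H1) as [N1 HN1].
    destruct (lim_ev X d de _ t Hde Hsep (fun k => HT _ (Hx k)) Xt H2) as [N2 HN2].
    assert (E1 : forall k, (k >= max N1 N2)%nat -> S (x k) = t) by (intros; apply HN1; lia).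
    assert (E2 : forall k, (k >= max N1 N2)%nat -> T (x k) = t) by (intros; apply HN2; lia).
    assert (ST : d (S t) (T t) = 0 <-> S t = T t) by (apply Hz; auto).
    assert (TS : d (T t) (S t) = 0 <-> S t = T t).
    { rewrite Hsym by auto. exact ST. }
    repeat split; intro H.
    - apply ST. revert H. apply ev_const. exists (max N1 N2). intros k Hk. rewrite E1, E2; auto.
    - refine (proj2 (ev_const _ (d (S t) (T t)) _) (proj2 ST H)). exists (max N1 N2). intros k Hk. rewrite E1, E2; auto.
    - apply ST. revert H. apply ev_const. exists (max N1 N2). intros k Hk. rewrite E2; auto.
    - refine (proj2 (ev_const _ (d (S t) (T t)) _) (proj2 ST H)). exists (max N1 N2). intros k Hk. rewrite E2; auto.
    - apply TS. revert H. apply ev_const. exists (max N1 N2). intros k Hk. rewrite E1; auto.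
    - refine (proj2 (ev_const _ (d (T t) (S t)) _) (proj2 TS H)). exists (max N1 N2). intros k Hk. rewrite E1; auto.
    - apply ST. revert H. apply ev_const. exists (max N1 N2). intros k Hk. rewrite E1, E2; auto.
    - refine (proj2 (ev_const _ (d (S t) (T t)) _) (proj2 ST H)). exists (max N1 N2). intros k Hk. rewrite E1, E2; auto. }
  unfold compatible, compatible_A, compatible_P.
  split; split; intros H x Hx; destruct (Key x Hx) as [t [_ [K1 [K2 [K3 K4]]]]]; specialize (H x Hx).
  - split; [apply K2|apply K3]; apply K1; auto.
  - apply K1, K2, H.
  - apply K4, K2, H.
  - split; [apply K2|apply K3]; apply K4; auto.
Qed.
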